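(* Let $n\in\mathbb{N}_+$, $i\in\{0,\dots,n\}$ and let $l$ be a positive integer. Then $$\|B_n^l e_{i+1}\|_1=\begin{cases}\Big(\sum_{j=0}^{i}\binom{n}{j}\Big)^l & \text{if } i\le\lfloor n/2\rfloor,\\[4pt] \Big(\sum_{j=0}^{\lfloor n/2\rfloor}\binom{n}{j}\Big)^l+l\sum_{s=\lfloor n/2\rfloor+1}^{i}\Big(\sum_{j=0}^{n-s}\binom{n}{j}\Big)^{l-1}\binom{n}{n-s} & \text{if } i>\lfloor n/2\rfloor,\end{cases}$$ where $e_{i+1}\in\mathbb{R}^{n+1}$ is the $(i+1)$-th standard unit vector.
   Context: $V$ denotes sequences $(v_j)_{j\in\mathbb{N}}$ (indexed from $0$) of nonnegative integers with finite sum; ${\rm e}_k\in V$ has $({\rm e}_k)_j=\delta_{kj}$. For $i^*\in\mathbb{N}$, the clipping $\mathrm{cl}_{i^*}:V\to V$ is $\mathrm{cl}_{i^*}(v)_i=v_i$ for $i<i^*$, $\sum_{j\ge i^*}v_j$ for $i=i^*$, $0$ for $i>i^*$. For $n\in\mathbb{N}_+$ and $k\in\{0,\dots,n\}$ let $\gamma_{k,n}=\sum_{j=0}^{k}\binom{n}{j}{\rm e}_{n-j}\in V$. The binomial bound matrix $B_n\in\mathbb{N}^{(n+1)\times(n+1)}$ is defined by $(B_n)_{a,b}=(\mathrm{cl}_{b-1}(\gamma_{b-1,n}))_{a-1}$ for $a,b\in\{1,\dots,n+1\}$. $\|\cdot\|_1$ is the sum of absolute values of entries. *)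

(* Defs.v *)
From mathcomp Require Import all_boot all_order all_algebra.
Set Implicit Arguments. Unset Strict Implicit. Unset Printing Implicit Defensive.
Import Order.TTheory GRing.Theory Num.Theory.

(* Elements of V (finitely supported nat sequences) are represented by a
   finite list s : seq nat, with v_j = nth 0 s j (zero beyond size s). *)
Definition Vcoef (s : seq nat) (j : nat) : nat := nth 0%N s j.

Definition Ve (k : nat) : seq nat := rcons (nseq k 0%N) 1%N.

Definition clip (istar : nat) (s : seq nat) : seq nat :=
  mkseq (fun i => if (i < istar)%N then Vcoef s i
                  else \sum_(istar <= j < size s) Vcoef s j) istar.+1.

Definition gamma (k n : nat) : seq nat :=
  mkseq (fun p => \sum_(j < k.+1) 'C(n, j) * Vcoef (Ve (n - j)) p)%N n.+1.

(* Binomial bound matrix, 0-indexed: (B_n)_{a,b} = cl_b(gamma_{b,n})_a *)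
Definition Bmat (n : nat) : 'M[int]_(n.+1) :=
  \matrix_(a < n.+1, b < n.+1) Posz (Vcoef (clip b (gamma b n)) a).

Definition norm1 (m : nat) (v : 'cV[int]_m) : int := (\sum_(a < m) `|v a 0|)%R.

(* Main.v *)
Require Import Defs.
From mathcomp Require Import all_boot all_order all_algebra.
From mathcomp Require Import zify ring lra.
Import Order.TTheory GRing.Theory Num.Theory.
Set Implicit Arguments. Unset Strict Implicit. Unset Printing Implicit Defensive.

Definition Sb n k := \sum_(j < k.+1) 'C(n, j).
Definition G n b p := if n - p <= b then 'C(n, p) else 0.

Lemma SbS n k : Sb n k.+1 = Sb n k + 'C(n, k.+1).
Proof. by rewrite /Sb big_ord_recr. Qed.

Lemma Ve_nth k p : nth 0 (Ve k) p = (p == k).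
Proof.
rewrite /Ve nth_rcons size_nseq nth_nseq.
case: ltngtP => //; by rewrite if_same.
Qed.

Lemma gammaE n b p : b <= n -> p <= n -> Vcoef (gamma b n) p = G n b p.
Proof.
move=> hb hp; rewrite /Vcoef /gamma nth_mkseq ?ltnS //.
elim: b hb => [|b IH] hb.
  rewrite big_ord1 /Vcoef Ve_nth bin0 /G.
  case: (ltngtP p n) => h.
  - have -> : (p == n - 0) = false by apply/eqP; lia.
    have -> : (n - p <= 0) = false by lia. by [].
  - lia.
  - by subst; rewrite subn0 eqxx subnn binn.
rewrite big_ord_recr /= IH; last by lia.
rewrite /Vcoef Ve_nth /G.
case: (ltngtP (n - p) b.+1) => h.
- have -> : n - p <= b by lia.
  have -> : (p == n - b.+1) = false by apply/eqP; lia.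
  by rewrite muln0 addn0.
- have -> : (n - p <= b) = false by lia.
  have -> : (p == n - b.+1) = false by apply/eqP; lia.
  by rewrite muln0.
- have -> : (n - p <= b) = false by lia.
  have -> : (p == n - b.+1) by apply/eqP; lia.
  by rewrite muln1 -h bin_sub.
Qed.

Lemma sum_top n b : b <= n -> \sum_(n - b <= p < n.+1) 'C(n, p) = Sb n b.
Proof.
elim: b => [|b IH] hb.
  by rewrite subn0 big_nat1 /Sb big_ord1 binn bin0.
rewrite SbS -IH; last by lia.
have -> : n - b = (n - b.+1).+1 by lia.
rewrite big_ltn; last by lia.
by rewrite addnC bin_sub.
Qed.

Lemma Tlow n b : 2 * b <= n -> \sum_(b <= p < n.+1) G n b p = Sb n b.
Proof.
move=> h; rewrite (big_cat_nat _ (n := n - b)); try lia.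
rewrite /= big1_seq ?add0n; last first.
  move=> p; rewrite mem_index_iota => /andP [_ hp]; rewrite /G.
  by have -> : (n - p <= b) = false by lia.
rewrite -sum_top; last by lia.
apply: eq_big_nat => p hp; rewrite /G.
by have -> : n - p <= b by lia.
Qed.

Lemma Thigh n b : b <= n -> n < 2 * b -> \sum_(b <= p < n.+1) G n b p = Sb n (n - b).
Proof.
move=> h1 h2; rewrite -sum_top; last by lia.
have -> : n - (n - b) = b by lia.
apply: eq_big_nat => p hp; rewrite /G.
by have -> : n - p <= b by lia.
Qed.

Lemma Bentry n (a b : 'I_n.+1) : Bmat n a b =
  Posz (if a < b then G n b a else if a == b :> nat then \sum_(b <= p < n.+1) G n b p else 0).
Proof.
rewrite mxE /Vcoef /clip.
have hb : b <= n by rewrite -ltnS.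
have ha : a <= n by rewrite -ltnS.
case: (ltngtP a b) => h.
- by rewrite nth_mkseq ?h -/(Vcoef _ _) ?gammaE //; lia.
- by rewrite nth_default // size_mkseq.
- rewrite -h nth_mkseq // ltnn size_mkseq.
  apply/eqP; rewrite eqz_nat; apply/eqP.
  apply: eq_big_nat => p hp; apply: gammaE; lia.
Qed.

Section M.
Local Open Scope ring_scope.

Definition ev n (k : nat) : 'cV[int]_n.+1 := \col_a ((nat_of_ord a == k)%:R).
Definition sig n (v : 'cV[int]_n.+1) : int := \sum_a v a 0.

Lemma colE n (M : 'M[int]_n.+1) (b : nat) (a : 'I_n.+1) (j : 'I_1) : (b <= n)%N ->
  (M *m ev n b) a j = M a (inord b).
Proof.
move=> hb; rewrite mxE (bigD1 (inord b)) //= big1 ?addr0.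
  by rewrite mxE inordK // eqxx mulr1.
move=> k hk; rewrite mxE.
have -> : (nat_of_ord k == b) = false.
  apply/negbTE; apply: contra hk => /eqP <-; apply/eqP/val_inj; by rewrite /= inordK.
by rewrite mulr0.
Qed.

Lemma sigD n (u v : 'cV[int]_n.+1) : sig (u + v) = sig u + sig v.
Proof. by rewrite /sig -big_split; apply: eq_bigr => a _; rewrite mxE. Qed.

Lemma sigZ n c (u : 'cV[int]_n.+1) : sig (c *: u) = c * sig u.
Proof. by rewrite /sig mulr_sumr; apply: eq_bigr => a _; rewrite mxE. Qed.

Lemma sigN n (u : 'cV[int]_n.+1) : sig (- u) = - sig u.
Proof. by rewrite -scaleN1r sigZ mulN1r. Qed.

Lemma sig_ev n k : (k <= n)%N -> sig (ev n k) = 1.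
Proof.
move=> hk; rewrite /sig (bigD1 (inord k)) //= big1 ?addr0.
  by rewrite mxE inordK // eqxx.
move=> j hj; rewrite mxE.
have -> : (nat_of_ord j == k) = false.
  apply/negbTE; apply: contra hj => /eqP <-; apply/eqP/val_inj; by rewrite /= inordK.
by [].
Qed.

Lemma eigen_pow n (M : 'M[int]_n.+1) (v : 'cV[int]_n.+1) (c : int) : M *m v = c *: v ->
  forall l, (M ^+ l) *m v = c ^+ l *: v.
Proof.
move=> h; elim=> [|l IH]; first by rewrite !expr0 mul1mx scale1r.
by rewrite exprSr -mulmxE -mulmxA h -scalemxAr IH scalerA exprSr mulrC.
Qed.

Lemma jordan_pow n (M : 'M[int]_n.+1) (u w : 'cV[int]_n.+1) (c d : int) : M *m u = c *: u + d *: w -> M *m w = c *: w ->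
  forall l, (M ^+ l) *m u = c ^+ l *: u + (l%:R * c ^+ l.-1 * d) *: w.
Proof.
move=> hu hw; elim=> [|l IH]; first by rewrite !expr0 mul1mx scale1r !mul0r scale0r addr0.
rewrite exprSr -mulmxE -mulmxA hu mulmxDr -!scalemxAr IH (eigen_pow hw).
rewrite scalerDr !scalerA -addrA -scalerDl; congr (_ + _); first by rewrite exprSr mulrC.
congr (_ *: _); case: l {IH} => [|l] /=; first by rewrite !expr0; ring.
rewrite exprS; ring.
Qed.

Lemma nonneg_pow n (M : 'M[int]_n.+1) (v : 'cV[int]_n.+1) :
  (forall a b, 0 <= M a b) -> (forall a, 0 <= v a 0) -> forall l a, 0 <= ((M ^+ l) *m v) a 0.
Proof.
move=> hM hv; elim=> [|l IH] a; first by rewrite expr0 mul1mx.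
rewrite exprS -mulmxE -mulmxA mxE; apply: sumr_ge0 => k _.
by apply: mulr_ge0.
Qed.

Lemma norm1_sig n (v : 'cV[int]_n.+1) : (forall a, 0 <= v a 0) -> norm1 v = sig v.
Proof. by move=> h; apply: eq_bigr => a _; rewrite ger0_norm. Qed.

End M.

Section M.
Local Open Scope ring_scope.

Lemma B_eig n b : (2 * b <= n)%N -> Bmat n *m ev n b = (Sb n b)%:R *: ev n b.
Proof.
move=> hb; apply/matrixP => a j; rewrite colE; last by lia.
rewrite Bentry !mxE inordK; last by lia.
case: (ltngtP a b) => h.
- rewrite /G. have -> : (n - a <= b)%N = false by lia. by rewrite mulr0.
- by rewrite mulr0.
- rewrite -h Tlow //; lia.
Qed.

Lemma B_jord n i : (n < 2 * i.+1)%N -> (i.+1 <= n)%N ->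
  Bmat n *m (ev n i.+1 - ev n i) =
  (Sb n (n - i.+1))%:R *: (ev n i.+1 - ev n i) + ('C(n, i.+1))%:R *: ev n (n - i.+1).
Proof.
move=> h1 h2; apply/matrixP => a j; rewrite mulmxBr.
rewrite [LHS]mxE [X in _ + X]mxE colE // colE; last by lia.
rewrite !Bentry !mxE !inordK; try lia.
have ha : (a <= n)%N by rewrite -ltnS.
have eC : 'C(n, i.+1) = 'C(n, n - i.+1) by rewrite bin_sub.
case: (ltngtP a i.+1) => hai.
  case: (ltngtP a i) => hai'.
  +
    rewrite /G.
    have -> : ((nat_of_ord a == n - i.+1) = (n - a == i.+1)%N)%N by apply/eqP/eqP; lia.
    case: (ltngtP (n - a) i.+1) => e.
    * have -> : (n - a <= i)%N by lia. lia.
    * have -> : (n - a <= i)%N = false by lia. lia.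
    * have -> : (n - a <= i)%N = false by lia.
      have ea : nat_of_ord a = (n - i.+1)%N by lia.
      rewrite ea bin_sub; lia.
  + lia.
  +
    rewrite hai' /G.
    have -> : (n - i <= i.+1)%N by lia.
    have -> : ((i == n - i.+1) = (n == (2 * i).+1))%N by apply/eqP/eqP; lia.
    case: (boolP (2 * i <= n)%N) => h3.
    * rewrite Tlow //.
      case: (boolP (n == (2 * i).+1)) => /eqP h4.
      -- have -> : 'C(n, i) = 'C(n, i.+1) by rewrite -bin_sub ?h4; [congr 'C(_, _); lia| lia].
         have -> : (n - i.+1 = i)%N by lia. simpl; ring.
      -- have e5 : n = (2 * i)%N by lia.
         have -> : (n - i.+1 = i.-1)%N by lia.
         have -> : Sb n i = (Sb n i.-1 + 'C(n, i))%N.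
           case: (i) e5 => [|i'] e5 /=; first by lia. by rewrite SbS.
         rewrite PoszD /=; ring.
    * rewrite Thigh; [|lia|lia].
      have -> : ((n == (2 * i).+1) = false)%N by apply/eqP; lia.
      have -> : (n - i = (n - i.+1).+1)%N by lia.
      rewrite SbS PoszD.
      have -> : 'C(n, (n - i.+1).+1) = 'C(n, i).
        by rewrite -[in RHS]bin_sub; [congr 'C(_, _); lia | lia].
      simpl; ring.
  have -> : (a < i)%N = false by lia.
  have -> : ((nat_of_ord a == i) = false)%N by lia.
  have -> : ((nat_of_ord a == (n - i.+1)%N) = false)%N by lia.
  lia.
  rewrite hai.
  have -> : (i.+1 < i)%N = false by lia.
  have -> : ((i.+1 == i) = false)%N by lia.
  have -> : ((i.+1 == n - i.+1) = false)%N by apply/eqP; lia.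
  rewrite Thigh; [lia|lia|lia].
Qed.

End M.

Lemma half_facts n : (2 * n./2 <= n)%N /\ (n < 2 * n./2 + 2)%N.
Proof.
have := odd_double_half n; rewrite -muln2.
by case: (odd n) => /= e; lia.
Qed.

Section M.
Local Open Scope ring_scope.

Lemma P_low n l k : (2 * k <= n)%N -> sig (Bmat n ^+ l *m ev n k) = Posz (Sb n k ^ l)%N.
Proof.
move=> hk; rewrite (eigen_pow (B_eig hk)) sigZ sig_ev; last by lia.
by rewrite mulr1 -natrX natz.
Qed.

Lemma P_step n l k : (n < 2 * k.+1)%N -> (k.+1 <= n)%N ->
  sig (Bmat n ^+ l *m ev n k.+1) =
  sig (Bmat n ^+ l *m ev n k) + Posz (l * Sb n (n - k.+1) ^ (l - 1) * 'C(n, n - k.+1))%N.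
Proof.
move=> h1 h2.
have hw : (2 * (n - k.+1) <= n)%N by lia.
have := jordan_pow (B_jord h1 h2) (B_eig hw) l => hj.
have -> : ev n k.+1 = ev n k + (ev n k.+1 - ev n k) by rewrite addrC subrK.
rewrite mulmxDr sigD hj sigD !sigZ sigD sigN !sig_ev; try lia.
rewrite subrr mulr0 add0r mulr1 bin_sub; last by lia.
by rewrite -natrX -!natrM natz subn1.
Qed.

Lemma P_high n l d : (n./2 + d <= n)%N ->
  sig (Bmat n ^+ l *m ev n (n./2 + d)) =
  Posz (Sb n n./2 ^ l + l * \sum_((n./2).+1 <= s < (n./2 + d).+1)
                 (Sb n (n - s)) ^ (l - 1) * 'C(n, n - s))%N.
Proof.
elim: d => [|d IH] hd.
  rewrite addn0 P_low; last by have := half_facts n; lia.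
  by rewrite big_geq // muln0 addn0.
rewrite addnS P_step; first last.
- lia.
- have := half_facts n; lia.
rewrite IH; last by lia.
rewrite [in RHS]big_nat_recr /=; last by lia.
rewrite -PoszD; congr Posz; lia.
Qed.

End M.

Theorem mainTheorem10 (n : nat) (i : 'I_n.+1) (l : nat) :
  (0 < n)%N -> (0 < l)%N ->
  norm1 ((Bmat n ^+ l)%R *m (delta_mx i 0%R : 'cV[int]_(n.+1))) =
  Posz ((if (i <= n./2)%N then (\sum_(j < i.+1) 'C(n, j)) ^ l
   else (\sum_(j < (n./2).+1) 'C(n, j)) ^ l
        + l * \sum_((n./2).+1 <= s < i.+1)
                 (\sum_(j < (n - s).+1) 'C(n, j)) ^ (l - 1) * 'C(n, n - s))%N).
Proof.
move=> hn hl.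
have -> : (delta_mx i 0%R : 'cV[int]_(n.+1)) = ev n i.
  by apply/matrixP => a j; rewrite !mxE (ord1 j) eqxx andbT.
rewrite norm1_sig; last first.
  apply: nonneg_pow => [a b|a]; first by rewrite Bentry.
  by rewrite mxE.
have hi : (i <= n)%N by rewrite -ltnS.
case: ifP => h.
  by rewrite P_low //; have := half_facts n; lia.
have -> : nat_of_ord i = (n./2 + (i - n./2))%N by lia.
rewrite P_high; last by lia.
done.
Qed.
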